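(* Let $p\in(0,1/2)$, $\beta<0$ and $\alpha=\frac{2}{2-p}$. Let $\zeta$ be the global positive increasing solution on $(0,\infty)$ of $$\zeta'=\frac{\alpha^2\zeta+\varphi^p\zeta^{-1}}{\alpha(\alpha-1)\varphi-\beta\zeta}$$ satisfying $\zeta(0^+)=0$ and $|\zeta(\varphi)-\gamma_\beta\varphi^{(p+1)/3}|\le\varphi^q$ for small $\varphi$. Here $\gamma_\beta=[3/(|\beta|(p+1))]^{1/3}$ and $q\in(\frac{p+1}{3},1)$. Then for every $\varepsilon>0$ there exists $\varphi_\varepsilon>0$ such that $$\Big(\frac{\alpha}{|\beta|}-\varepsilon\Big)\varphi\le\zeta(\varphi)\le\Big(\frac{\alpha}{|\beta|}+\varepsilon\Big)\varphi\quad\text{for all }\varphi\ge\varphi_\varepsilon.$$ *)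

(* Defs.v *)
From Stdlib Require Export Reals.
From Coquelicot Require Export Coquelicot.
Open Scope R_scope.

Definition gamma_beta (p beta : R) : R :=
  Rpower (3 / (Rabs beta * (p + 1))) (1 / 3).

Definition ode_rhs (p alpha beta phi z : R) : R :=
  (alpha ^ 2 * z + Rpower phi p / z) / (alpha * (alpha - 1) * phi - beta * z).

(* Main.v *)
Require Import Defs.
From Stdlib Require Import Reals.
From Coquelicot Require Import Coquelicot.
From Stdlib Require Import Lra Psatz Classical.
Open Scope R_scope.


Lemma key (p alpha b phi z : R): 0<phi -> 0<z -> 0 < b -> 1 < alpha ->
 ode_rhs p alpha (-b) phi z - z/phi =
 ((z/phi)*(alpha - b*(z/phi)) + Rpower phi p/(z*phi)) / (alpha*(alpha-1) + b*(z/phi)).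
Proof.
 intros. unfold ode_rhs.
 assert (alpha*(alpha-1) > 0) by nra.
 assert (alpha * (alpha - 1) * phi - - b * z > 0) by nra.
 assert (alpha * (alpha - 1) + b * (z / phi) > 0).
 { assert (z/phi > 0) by (apply Rdiv_lt_0_compat; lra). nra. }
 field. repeat split; lra.
Qed.

Lemma lowerineq (alpha a b eps w Q : R) : 0 < b -> 0 < a -> 0 < alpha -> 0 <= Q -> 0 < w ->
  0 < eps -> b*w <= alpha - b*eps ->
  (w*(alpha - b*w) + Q)/(a + b*w) >= w*b*eps/(a+alpha).
Proof.
 intros. assert (b*eps>0) by (apply Rmult_lt_0_compat; lra). apply Rle_ge.
 assert (a + b*w > 0) by nra.
 apply (Rle_trans _ (w*b*eps/(a+b*w))).
 - unfold Rdiv. apply Rmult_le_compat_l; [left; repeat apply Rmult_lt_0_compat; lra|].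
   apply Rinv_le_contravar; lra.
 - unfold Rdiv. apply Rmult_le_compat_r; [left; apply Rinv_0_lt_compat; lra|]. nra.
Qed.

Lemma upperineq (alpha a b eps w Q : R) : 0 < b -> 0 < a -> 0 < alpha -> 0 <= Q -> 0 < w ->
  0 < eps -> b*w >= alpha + b*eps -> Q <= w*b*eps/2 ->
  (w*(alpha - b*w) + Q)/(a + b*w) <= - (alpha*eps/(2*(a+alpha))).
Proof.
 intros. assert (b*eps>0) by (apply Rmult_lt_0_compat; lra). assert (a + b*w > 0) by nra.
 apply (Rle_trans _ (-(w*b*eps)/(2*(a+b*w)))).
 - unfold Rdiv. rewrite Rinv_mult. 
   apply (Rmult_le_reg_r (a+b*w)); [lra|].
   rewrite !Rmult_assoc, Rinv_l by lra. nra.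
 - assert (Hd : w*b*eps/(2*(a+b*w)) - alpha*eps/(2*(a+alpha)) = eps*a*(b*w-alpha)/(2*(a+b*w)*(a+alpha))) by (field; lra).
   assert (eps*a*(b*w-alpha)/(2*(a+b*w)*(a+alpha)) >= 0).
   { apply Rle_ge. apply Rdiv_le_0_compat.
     - apply Rmult_le_pos; [left; apply Rmult_lt_0_compat|]; lra.
     - apply Rmult_lt_0_compat; lra. }
   unfold Rdiv in *. lra.
Qed.


Lemma barrier (f f' : R -> R) (x0 L : R) :
 (forall x, x0 < x -> derivable_pt_lim f x (f' x)) ->
 (forall x, x0 < x -> f x <= L -> 0 < f' x) ->
 forall x1, x0 < x1 -> L < f x1 -> forall x2, x1 <= x2 -> L < f x2.
Proof.
 intros Hd Hs x1 Hx1 Hf1 x2 H12.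
 destruct (Rlt_or_le L (f x2)) as [h|h]; [exact h|exfalso].
 set (E := fun x => x1 <= x <= x2 /\ forall y, x1 <= y <= x -> L < f y).
 assert (HB : bound E) by (exists x2; intros x [[_ ?] _]; auto).
 assert (HE : exists x, E x).
 { exists x1; split; [lra|]. intros y Hy; replace y with x1 by lra; auto. }
 destruct (completeness E HB HE) as [s [Hub Hlub]].
 assert (Hs1 : x1 <= s) by (apply Hub; destruct HE; unfold E; split; [lra|]; intros y Hy; replace y with x1 by lra; auto).
 assert (Hs2 : s <= x2) by (apply Hlub; intros x [[_ ?] _]; auto).
 assert (Hleft: forall y, x1 <= y < s -> L < f y).
 { intros y Hy. destruct (Rlt_or_le L (f y)) as [hy|hy]; [exact hy|exfalso].
   assert (s <= y); [|lra]. apply Hlub. intros x [Hx Hx'].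
   destruct (Rle_or_lt x y) as [|hxy]; [auto|]. exfalso.
   specialize (Hx' y ltac:(lra)). lra. }
 assert (Hx0s : x0 < s) by lra.
 pose proof (Hd s Hx0s) as D.
 destruct (Rle_or_lt (f s) L) as [hs|hs].
 - pose proof (Hs s Hx0s hs) as Hpos.
   destruct (D (f' s) Hpos) as [del Hdel].
   assert (x1 < s).
   { destruct Hs1 as [|e]; auto. subst s. lra. }
   pose proof (cond_pos del).
   set (k := Rmin (del/2) ((s-x1)/2)).
   assert (k > 0) by (unfold k; apply Rmin_glb_lt; lra).
   assert (k <= del/2) by apply Rmin_l.
   assert (k <= (s-x1)/2) by apply Rmin_r.
   specialize (Hdel (-k) ltac:(lra) ltac:(rewrite Rabs_Ropp, Rabs_right; lra)).
   apply Rabs_def2 in Hdel. destruct Hdel as [_ Hq].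
   set (q := (f (s + - k) - f s) / - k) in *.
   assert (Heq : f (s + - k) - f s = q * (- k)) by (unfold q; field; lra).
   assert (L < f (s + - k)) by (apply Hleft; lra).
   nra.
 - assert (s < x2) by (destruct Hs2 as [|e]; auto; subst; lra).
   destruct (D 1 Rlt_0_1) as [del Hdel].
   pose proof (cond_pos del).
   set (M := Rabs (f' s) + 1).
   assert (M > 0) by (unfold M; pose proof (Rabs_pos (f' s)); lra).
   set (k := Rmin (Rmin (del/2) ((x2-s)/2)) ((f s - L)/(2*M))).
   assert (0 < (f s - L)/(2*M)) by (apply Rdiv_lt_0_compat; lra).
   assert (k > 0) by (unfold k; repeat apply Rmin_glb_lt; lra).
   assert (k <= del/2) by (unfold k; eapply Rle_trans; [apply Rmin_l|apply Rmin_l]).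
   assert (k <= (x2-s)/2) by (unfold k; eapply Rle_trans; [apply Rmin_l|apply Rmin_r]).
   assert (Hk3 : k <= (f s - L)/(2*M)) by (unfold k; apply Rmin_r).
   assert (HEk : E (s + k)).
   { split; [lra|]. intros y Hy.
     destruct (Rlt_or_le y s) as [hy|hy]; [apply Hleft; lra|].
     destruct hy as [hy|hy]; [|subst; auto].
     specialize (Hdel (y - s) ltac:(lra) ltac:(rewrite Rabs_right; lra)).
     apply Rabs_def2 in Hdel. destruct Hdel as [_ Hq].
     replace (s + (y - s)) with y in Hq by ring.
     set (q := (f y - f s) / (y - s)) in *.
     assert (Heq : f y - f s = q * (y - s)) by (unfold q; field; lra).
     assert (Hm : - Rabs (f' s) <= f' s) by (pose proof (Rabs_pos (f' s)); destruct (Rcase_abs (f' s)); [rewrite Rabs_left; lra| rewrite Rabs_right; lra]).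
     assert (q >= - M) by (unfold M; lra).
     assert ((y - s) * (2 * M) <= f s - L).
     { apply (Rle_trans _ (k * (2*M))). nra.
       apply (Rmult_le_compat_r (2*M)) in Hk3; [|lra]. unfold Rdiv in Hk3.
       rewrite Rmult_assoc, Rinv_l in Hk3; lra. }
     nra. }
   specialize (Hub _ HEk). lra.
Qed.


Lemma main_ (p beta : R) (zeta : R -> R) :
  0 < p < 1 / 2 ->
  beta < 0 ->
  let alpha := 2 / (2 - p) in
  (forall phi, 0 < phi -> 0 < zeta phi) ->
  (forall phi, 0 < phi ->
     derivable_pt_lim zeta phi (ode_rhs p alpha beta phi (zeta phi))) ->
  forall eps, 0 < eps ->
  exists phi_eps, 0 < phi_eps /\
    forall phi, phi_eps <= phi ->
      (alpha / Rabs beta - eps) * phi <= zeta phi <= (alpha / Rabs beta + eps) * phi.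
Proof.
 intros Hp Hbeta alpha Hpos Hder eps Heps.
 assert (Ha1 : 1 < alpha).
 { assert (alpha * (2-p) = 2) by (unfold alpha; field; lra). nra. }
 clearbody alpha.
 set (b := Rabs beta).
 assert (Hb : beta = - b) by (unfold b; rewrite Rabs_left; lra).
 assert (Hb0 : 0 < b) by (unfold b; rewrite Rabs_left; lra).
 rewrite Hb in Hder. clearbody b.
 set (a := alpha*(alpha-1)).
 assert (Ha : 0 < a) by (unfold a; nra).
 set (c := alpha / b).
 assert (Hc : b * c = alpha) by (unfold c; field; lra).
 assert (Hc0 : 0 < c) by (unfold c; apply Rdiv_lt_0_compat; lra).
 set (u := fun x => zeta x / x).
 set (u' := fun x => (ode_rhs p alpha (-b) x (zeta x) - u x)/x).
 assert (Hu : forall x, 0 < x -> derivable_pt_lim u x (u' x)).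
 { intros x Hx. pose proof (derivable_pt_lim_div zeta id x _ 1 (Hder x Hx) (derivable_pt_lim_id x) ltac:(unfold id; lra)) as H.
   unfold u', u. unfold id in H. replace ((ode_rhs p alpha (- b) x (zeta x) - zeta x / x) / x)
     with ((ode_rhs p alpha (- b) x (zeta x) * x - 1 * zeta x) / (x)²); [exact H|].
   unfold Rsqr; field; lra. }
 assert (Hupos : forall x, 0 < x -> 0 < u x) by (intros x Hx; unfold u; apply Rdiv_lt_0_compat; auto).
 assert (Hu'form : forall x, 0 < x -> u' x =
   ((u x)*(alpha - b*(u x)) + Rpower x p/(zeta x*x)) / (a + b*(u x)) / x).
 { intros x Hx. unfold u', u, a. rewrite key; auto. }
 assert (HQ : forall x, 0 < x -> 0 <= Rpower x p/(zeta x*x)).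
 { intros x Hx. left. apply Rdiv_lt_0_compat. unfold Rpower; apply exp_pos.
   apply Rmult_lt_0_compat; auto. }
 set (K1 := b*eps/(a+alpha)).
 assert (HK1 : 0 < K1) by (unfold K1; apply Rdiv_lt_0_compat; [apply Rmult_lt_0_compat|]; lra).
 assert (Hlow : forall x, 0 < x -> u x <= c - eps -> u' x >= K1 * u x / x).
 { intros x Hx Hux. rewrite Hu'form by auto.
   pose proof (lowerineq alpha a b eps (u x) _ Hb0 Ha ltac:(lra) (HQ x Hx) (Hupos x Hx) Heps ltac:(nra)).
   unfold Rdiv in *. apply Rmult_ge_compat_r; [left; apply Rinv_0_lt_compat; auto|].
   unfold K1. unfold Rdiv. lra. }
 set (K2 := alpha*eps/(2*(a+alpha))).
 assert (HK2 : 0 < K2) by (unfold K2; apply Rdiv_lt_0_compat; [apply Rmult_lt_0_compat|]; lra).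
 set (phi2 := 2*b/(alpha^2*eps) + 1).
 assert (Hphi2 : 1 <= phi2).
 { unfold phi2. assert (0 < 2*b/(alpha^2*eps)); [|lra]. apply Rdiv_lt_0_compat; [lra|].
   apply Rmult_lt_0_compat; [apply pow_lt|]; lra. }
 assert (Hupp : forall x, phi2 <= x -> u x >= c + eps -> u' x <= - K2 / x).
 { intros x Hx Hux. assert (Hx0 : 0 < x) by lra. rewrite Hu'form by auto.
   set (w := u x) in *.
   assert (Hz : zeta x = w * x) by (unfold w, u; field; lra).
   assert (Hw : 0 < w) by (apply Hupos; lra).
   assert (HP : Rpower x p <= x).
   { rewrite <- (Rpower_1 x) at 2 by lra. apply Rle_Rpower; lra. }
   assert (HQ1 : Rpower x p / (zeta x * x) <= 1 / (w*x)).
   { rewrite Hz. unfold Rdiv. apply (Rle_trans _ (x * / (w*x*x))).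
     - apply Rmult_le_compat_r; [left; apply Rinv_0_lt_compat; apply Rmult_lt_0_compat; [apply Rmult_lt_0_compat|]; lra|exact HP].
     - right. field. lra. }
   assert (Hxb : x * (alpha^2*eps) >= 2*b).
   { assert (0 < alpha^2*eps) by (apply Rmult_lt_0_compat; [apply pow_lt|]; lra).
     assert (2*b/(alpha^2*eps) * (alpha^2*eps) = 2*b) by (field; lra).
     unfold phi2 in Hx. nra. }
   assert (Hwc : w >= c) by lra.
   assert (Hww : w*w*b >= c*alpha). { assert (w*w >= c*c) by nra. rewrite <- Hc. replace (c*(b*c)) with ((c*c)*b) by ring. apply Rmult_ge_compat_r; lra. }
   assert (H2 : 2 <= w*w*b*eps*x).
   { assert (c*alpha*eps*x >= 2).
     { assert (c*(x*(alpha^2*eps)) >= c*(2*b)) by nra.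
       assert (c*(x*(alpha^2*eps)) = alpha*(c*alpha*eps*x)) by ring.
       assert (c*(2*b) = 2*alpha) by (rewrite <- Hc; ring). nra. }
     assert (w*w*b*eps*x >= c*alpha*eps*x).
     { apply Rmult_ge_compat_r; [lra|]. apply Rmult_ge_compat_r; lra. }
     lra. }
   assert (HQ2 : 1/(w*x) <= w*b*eps/2).
   { assert (0 < w*x) by (apply Rmult_lt_0_compat; lra).
     apply (Rmult_le_reg_r (2*(w*x))); [lra|].
     replace (1 / (w * x) * (2 * (w * x))) with 2 by (field; lra).
     replace (w * b * eps / 2 * (2 * (w * x))) with (w*w*b*eps*x) by (field; lra). lra. }
   pose proof (upperineq alpha a b eps w _ Hb0 Ha ltac:(lra) (HQ x Hx0) Hw Heps ltac:(rewrite <- Hc; nra) ltac:(lra)) as HI.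
   unfold Rdiv in *. apply Rmult_le_compat_r; [left; apply Rinv_0_lt_compat; auto|].
   unfold K2. unfold Rdiv. lra. }
 assert (Hex1 : exists x1, 1 < x1 /\ c - eps < u x1).
 { apply NNPP. intro Hn.
   assert (Hall : forall x, 1 < x -> u x <= c - eps).
   { intros x Hx. destruct (Rle_or_lt (u x) (c-eps)) as [h|h]; auto. exfalso; apply Hn; eauto. }
   set (u0 := u 2). assert (Hu0 : 0 < u0) by (apply Hupos; lra).
   assert (Hmono : forall x, 2 <= x -> u0 <= u x).
   { intros x Hx. destruct Hx as [Hx|Hx]; [|rewrite <- Hx; unfold u0; lra].
     destruct (MVT_cor2 u u' 2 x Hx (fun y Hy => Hu y ltac:(lra))) as [xi [Heq Hxi]].
     pose proof (Hlow xi ltac:(lra) (Hall xi ltac:(lra))) as Hl.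
     assert (K1 * u xi / xi > 0).
     { apply Rdiv_lt_0_compat; [apply Rmult_lt_0_compat; [lra|apply Hupos; lra]|lra]. }
     assert (u' xi * (x - 2) > 0) by (apply Rmult_lt_0_compat; lra).
     unfold u0; lra. }
   set (X := exp (ln 2 + c/(K1*u0))).
   assert (Hcpos : 0 < c/(K1*u0)) by (apply Rdiv_lt_0_compat; [lra|apply Rmult_lt_0_compat; lra]).
   assert (HX : 2 < X).
   { unfold X. rewrite <- (exp_ln 2) at 1 by lra. apply exp_increasing. lra. }
   destruct (MVT_cor2 (fun x => u x - K1*u0*ln x) (fun x => u' x - K1*u0*/x) 2 X HX) as [xi [Heq Hxi]].
   { intros y Hy. apply (derivable_pt_lim_minus u (mult_real_fct (K1*u0) ln) y (u' y) (K1*u0* / y)).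
     - apply Hu; lra.
     - apply derivable_pt_lim_scal. apply derivable_pt_lim_ln; lra. }
   assert (Hd : u' xi - K1*u0*/xi >= 0).
   { pose proof (Hlow xi ltac:(lra) (Hall xi ltac:(lra))) as Hl.
     pose proof (Hmono xi ltac:(lra)).
     assert (K1 * u xi / xi >= K1*u0*/xi).
     { unfold Rdiv. apply Rmult_ge_compat_r; [left; apply Rinv_0_lt_compat; lra|].
       apply Rmult_ge_compat_l; lra. }
     lra. }
   assert (Hlx : ln X = ln 2 + c/(K1*u0)) by (unfold X; apply ln_exp).
   assert (HK : K1*u0*(c/(K1*u0)) = c) by (field; lra).
   assert ((u' xi - K1*u0*/xi) * (X - 2) >= 0) by (apply Rle_ge, Rmult_le_pos; lra).
   pose proof (Hall X ltac:(lra)).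
   rewrite Hlx in Heq. unfold u0 in *. nra. }
 assert (Hex2 : exists x1, phi2 < x1 /\ u x1 < c + eps).
 { apply NNPP. intro Hn.
   assert (Hall : forall x, phi2 < x -> u x >= c + eps).
   { intros x Hx. destruct (Rlt_or_le (u x) (c+eps)) as [h|h]; [|lra]. exfalso; apply Hn; eauto. }
   set (s := phi2 + 1).
   assert (Hs0 : 0 < s) by (unfold s; lra).
   assert (Hus : 0 < u s) by (apply Hupos; lra).
   set (X := exp (ln s + u s/K2)).
   assert (Hcpos : 0 < u s/K2) by (apply Rdiv_lt_0_compat; lra).
   assert (HX : s < X).
   { unfold X. rewrite <- (exp_ln s) at 1 by lra. apply exp_increasing. lra. }
   destruct (MVT_cor2 (fun x => u x + K2*ln x) (fun x => u' x + K2*/x) s X HX) as [xi [Heq Hxi]].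
   { intros y Hy. apply (derivable_pt_lim_plus u (mult_real_fct K2 ln) y (u' y) (K2* / y)).
     - apply Hu; lra.
     - apply derivable_pt_lim_scal. apply derivable_pt_lim_ln; lra. }
   assert (Hd : u' xi + K2*/xi <= 0).
   { pose proof (Hupp xi ltac:(unfold s in *; lra) (Hall xi ltac:(unfold s in *; lra))) as Hl.
     unfold Rdiv in Hl. lra. }
   assert (Hlx : ln X = ln s + u s/K2) by (unfold X; apply ln_exp).
   assert (HK : K2*(u s/K2) = u s) by (field; lra).
   assert ((u' xi + K2*/xi) * (X - s) <= 0).
   { apply Rmult_le_0_r; lra. }
   pose proof (Hupos X ltac:(lra)).
   rewrite Hlx in Heq. nra. }
 destruct Hex1 as [x1 [Hx1 Hux1]].
 destruct Hex2 as [x2 [Hx2 Hux2]].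
 pose proof (barrier u u' 1 (c - eps) (fun x Hx => Hu x ltac:(lra))) as B1.
 pose proof (barrier (fun x => - u x) (fun x => - u' x) phi2 (-(c + eps))) as B2.
 exists (Rmax x1 x2). split; [apply (Rlt_le_trans _ x1); [lra|apply Rmax_l]|].
 intros phi Hphi.
 assert (Hp1 : x1 <= phi) by (eapply Rle_trans; [apply Rmax_l|exact Hphi]).
 assert (Hp2 : x2 <= phi) by (eapply Rle_trans; [apply Rmax_r|exact Hphi]).
 assert (L1 : c - eps < u phi).
 { refine (B1 _ x1 Hx1 Hux1 phi Hp1). intros x Hx Hux. pose proof (Hlow x ltac:(lra) Hux).
   assert (K1 * u x / x > 0).
   { apply Rdiv_lt_0_compat; [apply Rmult_lt_0_compat; [lra|apply Hupos; lra]|lra]. }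
   lra. }
 assert (L2 : -(c + eps) < - u phi).
 { refine (B2 _ _ x2 Hx2 ltac:(lra) phi Hp2).
   - intros x Hx. apply derivable_pt_lim_opp. apply Hu; lra.
   - intros x Hx Hux. pose proof (Hupp x ltac:(lra) ltac:(lra)).
     assert (K2 / x > 0) by (apply Rdiv_lt_0_compat; lra). lra. }
 assert (Hphi0 : 0 < phi) by lra.
 assert (Hz : zeta phi = u phi * phi) by (unfold u; field; lra).
 rewrite Hz. split; apply Rmult_le_compat_r; lra.
Qed.

Theorem proposition7p3 (p beta q : R) (zeta : R -> R) :
  0 < p < 1 / 2 ->
  beta < 0 ->
  (p + 1) / 3 < q < 1 ->
  let alpha := 2 / (2 - p) in
  (* zeta is a global positive increasing solution on (0, oo) *)
  (forall phi, 0 < phi -> 0 < zeta phi) ->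
  (forall x y, 0 < x -> x < y -> zeta x < zeta y) ->
  (forall phi, 0 < phi ->
     derivable_pt_lim zeta phi (ode_rhs p alpha beta phi (zeta phi))) ->
  (* zeta(0+) = 0 *)
  filterlim zeta (at_right 0) (locally 0) ->
  (* |zeta(phi) - gamma_beta phi^((p+1)/3)| <= phi^q for small phi *)
  (exists delta, 0 < delta /\ forall phi, 0 < phi < delta ->
     Rabs (zeta phi - gamma_beta p beta * Rpower phi ((p + 1) / 3)) <= Rpower phi q) ->
  forall eps, 0 < eps ->
  exists phi_eps, 0 < phi_eps /\
    forall phi, phi_eps <= phi ->
      (alpha / Rabs beta - eps) * phi <= zeta phi <= (alpha / Rabs beta + eps) * phi.
Proof.
  intros Hp Hb _ alpha Hpos _ Hder _ _.
  exact (main_ p beta zeta Hp Hb Hpos Hder).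
Qed.
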